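(* Let $K,L$ be fields, let $n\ge m\ge 1$ be integers, and let $\sigma_1,\ldots,\sigma_n,\tau_1,\ldots,\tau_m\colon K\to L$ be field homomorphisms such that $\prod_{i=1}^n \sigma_i(a)=\prod_{j=1}^m \tau_j(a)$ for all $a\in K$. Then one of the following holds: (1) $n=m$ and there is a permutation $g\in S_n$ with $\tau_i=\sigma_{g(i)}$ for $1\le i\le n$; (2) $\operatorname{char}K=\operatorname{char}L=p>0$, and there are indices $1\le i_1<i_2<\cdots<i_p\le n$ with $\sigma_{i_1}=\sigma_{i_2}=\cdots=\sigma_{i_p}$. Moreover, for every $1\le j\le m$ there exist an integer $l$ with $-(m-1)\le l(p-1)\le n-1$ and an index $1\le i\le n$ with $\tau_j=\sigma_i\mathbf{p}^l$; and for every $1\le i\le n$ there exist an integer $l$ with $-(n-1)\le l(p-1)\le m-1$ and an index $1\le j\le m$ with $\sigma_i=\tau_j\mathbf{p}^l$.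
   Context: $\mathbf{p}$ denotes the Frobenius endomorphism $x\mapsto x^p$ of $L$. For field homomorphisms $\sigma,\tau\colon K\to L$ and an integer $l$, the equation $\tau=\sigma\mathbf{p}^l$ means: if $l\ge 0$, $\tau(a)=\sigma(a)^{p^l}$ for all $a\in K$; if $l<0$, $\tau(a)^{p^{-l}}=\sigma(a)$ for all $a\in K$ (i.e. $\sigma=\tau\mathbf{p}^{-l}$). *)

(* Defs.v *)
From HB Require Import structures.
From mathcomp Require Import all_boot all_order all_algebra all_fingroup.
Set Implicit Arguments. Unset Strict Implicit. Unset Printing Implicit Defensive.
Import Order.TTheory GRing.Theory Num.Theory.
Local Open Scope ring_scope.

(* frob_eq p sigma tau l  <->  tau = sigma p^l  (Frobenius twist convention):
   l >= 0 : tau a = (sigma a)^(p^l) for all a;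
   l < 0  : (tau a)^(p^(-l)) = sigma a for all a. *)
Definition frob_eq (K L : fieldType) (p : nat) (sigma tau : K -> L) (l : int)
  : Prop :=
  match l with
  | Posz k => forall a, tau a = sigma a ^+ (p ^ k)
  | Negz k => forall a, tau a ^+ (p ^ k.+1) = sigma a
  end.

(* Main.v *)
Require Import Defs.
From HB Require Import structures.
From mathcomp Require Import all_boot all_order all_algebra all_fingroup.
From mathcomp Require Import boolp ring zify.
Import Order.TTheory GRing.Theory Num.Theory.
Local Open Scope ring_scope.
Set Implicit Arguments. Unset Strict Implicit. Unset Printing Implicit Defensive.
Lemma dedekind {L : fieldType} (M : Type) (mul : M -> M -> M) (one : M) (I : finType)
  (chi : I -> M -> L) (c : I -> L) (D : {set I}) :
  (forall i, i \in D -> forall x y, chi i (mul x y) = chi i x * chi i y) ->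
  (forall i, i \in D -> chi i one = 1) ->
  (forall x, \sum_(i in D) c i * chi i x = 0) ->
  forall k, \sum_(i in D | chi i == chi k) c i = 0.
Proof.
move: {2}#|D| (leqnn #|D|) => N; elim: N D c => [|N IH] D c.
  rewrite leqn0 => /eqP/cards0_eq -> _ _ _ k.
  by rewrite big_pred0 // => i; rewrite inE.
move=> HD Hmul H1 Hsum k.
have [[l lD nl]|alleq] := pselect (exists2 l, l \in D & chi l != chi k); last first.
  rewrite -[RHS](Hsum one) big_mkcondr /=. apply: eq_bigr => i iD.
  case: eqP => [_|ne]; first by rewrite H1 // mulr1.
  by exfalso; apply: alleq; exists i => //; apply/eqP.
have [b /eqP hb] : exists b, ~ (chi k b = chi l b).
  apply/existsNP => H; move/eqP: nl; apply; apply/funext => b.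
  by rewrite H.
pose D' := [set i in D | chi i != chi l].
pose c' := fun i => c i * (chi i b - chi l b).
have D'D : D' \subset D by apply/subsetP => i; rewrite inE => /andP[].
have cardD' : (#|D'| <= N)%N.
  have : D' \proper D.
    by apply/properP; split => //; exists l => //; rewrite inE eqxx andbF.
  by move/proper_card => h; rewrite -ltnS; apply: leq_trans HD.
have Hsum' : forall x, \sum_(i in D') c' i * chi i x = 0.
  move=> x.
  transitivity (\sum_(i in D) c' i * chi i x).
    rewrite [RHS](big_setID D') /= (setIidPr D'D).
    rewrite [X in _ + X]big1 ?addr0 // => i /setDP [iD].
    rewrite inE iD /= negbK => /eqP ee.
    by rewrite /c' ee subrr mulr0 mul0r.
  rewrite /c'.
  transitivity (\sum_(i in D) c i * chi i (mul b x) - chi l b * \sum_(i in D) c i * chi i x).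
    rewrite mulr_sumr -sumrB; apply: eq_bigr => i iD.
    by rewrite Hmul //; ring.
  by rewrite !Hsum mulr0 subr0.
have := IH D' c' cardD' (fun i iD' => Hmul i (subsetP D'D i iD'))
  (fun i iD' => H1 i (subsetP D'D i iD')) Hsum' k.
have -> : \sum_(i in D' | chi i == chi k) c' i =
          (\sum_(i in D | chi i == chi k) c i) * (chi k b - chi l b).
  rewrite mulr_suml; apply: eq_big => [i|i /andP[_ /eqP ee]]; last by rewrite /c' ee.
  rewrite inE; case: (boolP (chi i == chi k)) => [/eqP ->|]; last by rewrite !andbF.
  by rewrite eq_sym nl andbT.
by move/eqP; rewrite mulf_eq0 subr_eq0 (negbTE hb) orbF => /eqP.
Qed.
Definition ishom {K L : fieldType} (f : K -> L) :=
  [/\ f 1 = 1, (forall a b, f (a * b) = f a * f b) & (forall a b, f (a + b) = f a + f b)].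

Section Homs.
Context {K L : fieldType}.
Implicit Types f : K -> L.

Lemma hom0 f : ishom f -> f 0 = 0.
Proof. by case=> _ _ hD; have := hD 0 0; rewrite addr0 => h; apply: (addrI (f 0)); rewrite addr0 -h. Qed.

Lemma hom_neq0 f a : ishom f -> a != 0 -> f a != 0.
Proof.
move=> [h1 hM hD] a0; apply/negP => /eqP fa0.
by move: (hM a a^-1); rewrite divff // h1 fa0 mul0r; move/eqP; rewrite oner_eq0.
Qed.

Lemma hom_inj f a b : ishom f -> f a = f b -> a = b.
Proof.
move=> hf e; apply/eqP; rewrite -subr_eq0; apply/negPn/negP => ne.
have := hom_neq0 hf ne; case: hf => _ _ hD.
have -> : f (a - b) = f a - f b by apply/eqP; rewrite -(addrK (f b) (f (a-b))) -hD subrK.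
by rewrite e subrr eqxx.
Qed.

End Homs.
Section Prods.
Context {K L : fieldType} (I : finType) (s : I -> K -> L).

Definition homs (A : {set I}) := forall i, i \in A -> ishom (s i).

Lemma prod1 A : homs A -> \prod_(i in A) s i 1 = 1.
Proof. by move=> h; apply: big1 => i /h []. Qed.

Lemma prodM A a b : homs A ->
  \prod_(i in A) s i (a * b) = (\prod_(i in A) s i a) * \prod_(i in A) s i b.
Proof. by move=> h; rewrite -big_split; apply: eq_bigr => i /h []. Qed.

Lemma prod0 A : homs A -> A != set0 -> \prod_(i in A) s i 0 = 0.
Proof.
move=> h /set0Pn [i iA]; rewrite (bigD1 i) //= hom0 ?mul0r //; exact: h.
Qed.

Lemma prod_neq0 A a : homs A -> a != 0 -> \prod_(i in A) s i a != 0.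
Proof. by move=> h a0; rewrite prodf_seq_neq0; apply/allP => i _; apply/implyP => /h/hom_neq0; apply. Qed.

End Prods.

Lemma expand {L : fieldType} (I : finType) (F G : I -> L) (A : {set I}) :
  \prod_(i in A) (F i + G i) =
  \sum_(S in powerset A) (\prod_(i in S) F i) * \prod_(i in A :\: S) G i.
Proof.
pose F' i := if i \in A then F i else 0.
pose G' i := if i \in A then G i else 1.
rewrite big_mkcond /=.
transitivity (\prod_i (F' i + G' i)).
  by apply: eq_bigr => i _; rewrite /F' /G'; case: (i \in A); rewrite ?add0r.
rewrite bigA_distr (bigID (fun S => S \in powerset A)) /=.
rewrite [X in _ + X]big1 ?addr0; last first.
  move=> S; rewrite powersetE => /subsetPn [i iS niA].
  by rewrite (bigD1 i) //= iS /F' (negbTE niA) mul0r.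
apply: eq_bigr => S; rewrite powersetE => /subsetP SA.
rewrite (bigID (mem S)) /=; congr (_ * _).
  rewrite big_mkcond [RHS]big_mkcond; apply: eq_bigr => i _.
  by case: (boolP (i \in S)) => // iS; rewrite /F' (SA i iS).
rewrite big_mkcond [RHS]big_mkcond; apply: eq_bigr => i _.
rewrite in_setD /G'; case: (boolP (i \in S)) => //= iS.

Qed.
Section LemT.
Context {K L : fieldType}.

Definition msq (I : finType) (s : I -> K -> L) (A : {set I}) : seq (K -> L) :=
  [seq s i | i <- enum A].
Definition cnt (I : finType) (s : I -> K -> L) (A : {set I}) f :=
  #|[set i in A | s i == f]|.
Definition good (I : finType) (s : I -> K -> L) (A : {set I}) :=
  forall f k, (0 < k <= cnt s A f)%N -> (k%:R : L) != 0.
Definition rel (I J : finType) (s : I -> K -> L) (A : {set I}) (t : J -> K -> L) (B : {set J}) :=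
  forall a, \prod_(i in A) s i a = \prod_(j in B) t j a.

Lemma count_msq (I : finType) (s : I -> K -> L) A f :
  count_mem f (msq s A) = cnt s A f.
Proof.
rewrite count_map -sum1_count big_enum_cond /= /cnt -sum1_card.
by apply: eq_bigl => i; rewrite !inE.
Qed.

Lemma size_msq (I : finType) (s : I -> K -> L) A : size (msq s A) = #|A|.
Proof. by rewrite size_map cardE. Qed.

Lemma good_sub (I : finType) (s : I -> K -> L) (A A' : {set I}) :
  A' \subset A -> good s A -> good s A'.
Proof.
move=> sub g f k /andP [k0 kc]; apply: (g f); rewrite k0 /=.
apply: (leq_trans kc); apply: subset_leq_card; apply/subsetP => i.
by rewrite !inE => /andP [/(subsetP sub) -> ->].
Qed.

Lemma homs_sub (I : finType) (s : I -> K -> L) (A A' : {set I}) :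
  A' \subset A -> homs s A -> homs s A'.
Proof. by move=> sub h i /(subsetP sub) /h. Qed.

Lemma cnt_eq_good (I J : finType) (s : I -> K -> L) (A : {set I}) (t : J -> K -> L) (B : {set J}) f :
  good s A -> good t B -> (cnt s A f)%:R = (cnt t B f)%:R :> L ->
  cnt s A f = cnt t B f.
Proof.
move=> gs gt e.
wlog le : I J s t A B gs gt e / (cnt t B f <= cnt s A f)%N.
  move=> W; case: (leqP (cnt t B f) (cnt s A f)) => h; first exact: W.
  by apply/esym/W => //; apply: ltnW.
apply/eqP; rewrite eqn_leq le andbT leqNgt; apply/negP => lt.
have := gs f (cnt s A f - cnt t B f)%N.
rewrite subn_gt0 lt leq_subr natrB // e subrr eqxx => /(_ isT) //.
Qed.

Lemma perm_from_cnt (T : eqType) (u v : seq T) :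
  (forall x, x \in u -> count_mem x u = count_mem x v) ->
  (size v <= size u)%N -> perm_eq u v.
Proof.
move=> h sz.
have /count_subseqP [w sw pw] : forall x, (count_mem x u <= count_mem x v)%N.
  move=> x; case: (boolP (x \in u)) => [/h -> //|/count_memPn -> //].
have szw := perm_size pw.
have e : w == v by rewrite -(size_subseq_leqif sw).2 eqn_leq (size_subseq sw) -szw sz.
by rewrite -(eqP e).
Qed.

Lemma cancel1 (I J : finType) (s : I -> K -> L) (A : {set I}) (t : J -> K -> L) (B : {set J}) i j :
  homs s A -> homs t B -> rel s A t B -> i \in A -> j \in B -> s i = t j ->
  A :\ i != set0 -> B :\ j != set0 -> rel s (A :\ i) t (B :\ j).
Proof.
move=> hs ht r iA jB e nA nB a.
case: (eqVneq a 0) => [->|a0].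
  rewrite !prod0 //; first exact: (homs_sub (subD1set _ _) ht).
  exact: (homs_sub (subD1set _ _) hs).
have := r a; rewrite (big_setD1 i) // (big_setD1 j) //= e.
by apply: mulfI; apply: hom_neq0 a0; apply: ht.
Qed.


Definition chiF (X : finType) (u : X -> K -> L) (C W : {set X}) : K * K -> L :=
  fun xy => (\prod_(w in W) u w xy.1) * \prod_(w in C :\: W) u w xy.2.

Lemma chiF_eq (X Y : finType) (u : X -> K -> L) (C W : {set X})
  (v : Y -> K -> L) (C' W' : {set Y}) :
  homs u C -> homs v C' -> W \subset C -> W' \subset C' ->
  chiF u C W = chiF v C' W' <->
  (forall x, \prod_(w in W) u w x = \prod_(w in W') v w x) /\
  (forall y, \prod_(w in C :\: W) u w y = \prod_(w in C' :\: W') v w y).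
Proof.
move=> hu hv sW sW'.
have h1 : forall (Z : finType) (z : Z -> K -> L) (E F : {set Z}), homs z E -> F \subset E ->
   \prod_(w in F) z w 1 = 1 /\ \prod_(w in E :\: F) z w 1 = 1.
  move=> Z z E F hz sF; split; apply: prod1.
    exact: homs_sub hz.
  exact: (homs_sub (subsetDl _ _) hz).
have [u1 u2] := h1 _ _ _ _ hu sW; have [v1 v2] := h1 _ _ _ _ hv sW'.
split.
  move=> e; split.
    by move=> x; have := congr1 (fun f => f (x, 1)) e; rewrite /chiF /= u2 v2 !mulr1.
  by move=> y; have := congr1 (fun f => f (1, y)) e; rewrite /chiF /= u1 v1 !mul1r.
by case=> e1 e2; apply: funext => -[x y]; rewrite /chiF /= e1 e2.
Qed.

Definition PT N := forall (I J : finType) (s : I -> K -> L) (t : J -> K -> L)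
  (A : {set I}) (B : {set J}),
  (#|A| <= N)%N -> (#|B| <= N)%N -> homs s A -> homs t B -> good s A -> good t B ->
  rel s A t B -> perm_eq (msq s A) (msq t B).

Lemma msq1 (I : finType) (s : I -> K -> L) i : msq s [set i] = [:: s i].
Proof. by rewrite /msq enum_set1. Qed.

Lemma lemG N (IH : PT N) (I X : finType) (s : I -> K -> L) (A : {set I}) i0
  (u : X -> K -> L) (C W : {set X}) :
  #|A| = N.+1 -> (1 < #|A|)%N -> i0 \in A -> homs s A -> good s A ->
  (#|C| <= N.+1)%N -> homs u C -> good u C -> W \subset C ->
  (forall x, \prod_(w in W) u w x = s i0 x) ->
  (forall y, \prod_(w in C :\: W) u w y = \prod_(i in A :\ i0) s i y) ->
  exists2 w, w \in C & (W = [set w] /\ u w = s i0).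
Proof.
move=> cA A2 i0A hs gs cC hu gu sWC e1 e2.
have cA1 : #|A :\ i0| = N by move: cA; rewrite (cardsD1 i0) i0A add1n => -[].
have A1ne : A :\ i0 != set0 by rewrite -card_gt0 cA1 -ltnS -cA.
have hA1 := homs_sub (subD1set A i0) hs.
have WN : (#|W| <= N)%N.
  rewrite leqNgt; apply/negP => lt.
  have /eqP WC : W == C by rewrite eqEcard sWC; apply: leq_trans cC _.
  have := e2 0; rewrite WC setDv big_set0 prod0 //; move/eqP; by rewrite oner_eq0.
have cD : #|C :\: W| = (#|C| - #|W|)%N by rewrite cardsD (setIidPr sWC).
case: (pselect (exists2 w, w \in W & u w = s i0)) => [[w wW uw]|nw].
  case: (boolP (W == [set w])) => [/eqP -> | neq].
    by exists w; [apply: (subsetP sWC) | ].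
  have W2 : (1 < #|W|)%N.
    rewrite ltnNge; apply/negP => W1; move/negP: neq; apply.
    by rewrite eq_sym eqEcard sub1set wW cards1 W1.
  have le1 : (#|C| - #|W| <= N)%N by lia.
  have := IH _ _ u s (C :\: W) (A :\ i0); rewrite cD cA1.
  move/(_ le1 (leqnn _) (homs_sub (subsetDl _ _) hu) hA1 (good_sub (subsetDl _ _) gu)
         (good_sub (subD1set _ _) gs) e2) /perm_size.
  rewrite !size_msq cD cA1; lia.
have := IH _ _ u s W [set i0] WN.
rewrite cards1 -ltnS -cA A2 => /(_ isT (homs_sub sWC hu)).
have s1A : [set i0] \subset A by rewrite sub1set.
move/(_ (homs_sub s1A hs) (good_sub sWC gu) (good_sub s1A gs)).
have r : rel u W s [set i0] by move=> a; rewrite e1 big_set1.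
move/(_ r); rewrite msq1 => /perm_mem pm.
have := pm (s i0); rewrite mem_seq1 eqxx => /mapP [w]; rewrite mem_enum => wW e.
by exfalso; apply: nw; exists w.
Qed.


Lemma cardLS N (IH : PT N) (I X : finType) (s : I -> K -> L) (A : {set I}) i0
  (u : X -> K -> L) (C : {set X}) :
  #|A| = N.+1 -> (1 < #|A|)%N -> i0 \in A -> homs s A -> good s A ->
  (#|C| <= N.+1)%N -> homs u C -> good u C -> rel u C s A ->
  #|[set W : {set X} | (W \subset C) && (chiF u C W == chiF s A [set i0])]| =
  if (1 < #|C|)%N then cnt u C (s i0) else 0%N.
Proof.
move=> cA A2 i0A hs gs cC hu gu r.
have s1A : [set i0] \subset A by rewrite sub1set.
have cA1 : #|A :\ i0| = N by move: cA; rewrite (cardsD1 i0) i0A add1n => -[].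
have A1ne : A :\ i0 != set0 by rewrite -card_gt0 cA1 -ltnS -cA.
have hA1 := homs_sub (subD1set A i0) hs.
have sub : forall W : {set X}, W \in [set W : {set X} | (W \subset C) && (chiF u C W == chiF s A [set i0])] ->
    exists2 w, w \in C & (W = [set w] /\ u w = s i0 /\
      forall y, \prod_(i in C :\ w) u i y = \prod_(i in A :\ i0) s i y).
  move=> W; rewrite inE => /andP [sWC /eqP /chiF_eq].
  case/(_ hu hs sWC s1A) => e1 e2.
  have [w wC [eW uw]] := lemG IH cA A2 i0A hs gs cC hu gu sWC
    (fun x => etrans (e1 x) (big_set1 _ _ _)) e2.
  by exists w => //; split => //; split => // y; rewrite -e2 eW.
case: ifP => C2.
  transitivity #|[set [set w] | w in [set w in C | u w == s i0]]|; last first.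
    by rewrite card_imset //; apply: set1_inj.
  apply: eq_card => W; apply/idP/imsetP.
    move/sub => [w wC [eW [uw _]]]; exists w => //; by rewrite inE wC uw eqxx.
  move=> [w]; rewrite inE => /andP [wC /eqP uw] ->; rewrite inE sub1set wC /=.
  apply/eqP/chiF_eq => //; first by rewrite sub1set.
  split; first by move=> x; rewrite !big_set1 uw.
  apply: cancel1 => //.
  by rewrite -card_gt0; move: C2; rewrite (cardsD1 w) wC; lia.
apply/eqP; rewrite cards_eq0; apply/negPn/negP => /set0Pn [W /sub [w wC [_ [_ e]]]].
have : C :\ w = set0.
  apply/eqP; rewrite -cards_eq0; move: C2; rewrite (cardsD1 w) wC; lia.
move=> C0; have := e 0; rewrite C0 big_set0 prod0 //; move/eqP; by rewrite oner_eq0.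
Qed.


Lemma lemT N : PT N.
Proof.
elim: N => [|N IH] I J s t A B cA cB hs ht gs gt r.
  move: cA cB; rewrite !leqn0 !cards_eq0 => /eqP -> /eqP ->.
  by rewrite /msq !enum_set0.
wlog BA : I J s t A B cA cB hs ht gs gt r / (#|B| <= #|A|)%N.
  move=> W; case: (leqP #|B| #|A|) => h; first exact: W.
  rewrite perm_sym; apply: W => //; try exact: ltnW; by move=> a; rewrite r.
case: (leqP #|A| N) => cAN.
  by apply: IH => //; apply: leq_trans cAN.
have cA' : #|A| = N.+1 by apply/eqP; rewrite eqn_leq cA cAN.
case: (leqP #|A| 1) => A1.
  have /cards1P [i0 Ai0] : #|A| == 1%N by rewrite eqn_leq A1 cA'.
  have i0A : i0 \in A by rewrite Ai0 set11.
  case: (leqP #|B| 0) => B0.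
    move: B0; rewrite leqn0 cards_eq0 => /eqP B0.
    have := r 0; rewrite B0 big_set0 Ai0 big_set1 hom0; last exact: hs.
    by move/eqP; rewrite eq_sym oner_eq0.
  have /cards1P [j0 Bj0] : #|B| == 1%N by rewrite eqn_leq B0 (leq_trans BA A1).
  rewrite Ai0 Bj0 !msq1.
  have -> // : s i0 = t j0.
  by apply: funext => a; have := r a; rewrite Ai0 Bj0 !big_set1.
have key : forall i0, i0 \in A -> cnt s A (s i0) = cnt t B (s i0).
  move=> i0 i0A.
  pose U := ({set I} + {set J})%type.
  pose D : {set U} := [set u : U | match u with inl S0 => S0 \subset A | inr T0 => T0 \subset B end].
  pose chi (u : U) : K * K -> L := match u with inl S0 => chiF s A S0 | inr T0 => chiF t B T0 end.
  pose c (u : U) : L := match u with inl _ => 1 | inr _ => -1 end.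
  pose mul := fun (x y : K * K) => (x.1 * y.1, x.2 * y.2).
  have hmul : forall u, u \in D -> forall x y, chi u (mul x y) = chi u x * chi u y.
    case=> [S0|T0]; rewrite inE => sub x y; rewrite /chi /chiF /=.
      rewrite !prodM; [ring | exact: (homs_sub (subsetDl _ _) hs) | exact: homs_sub hs].
    rewrite !prodM; [ring | exact: (homs_sub (subsetDl _ _) ht) | exact: homs_sub ht].
  have hone : forall u, u \in D -> chi u (1, 1) = 1.
    case=> [S0|T0]; rewrite inE => sub; rewrite /chi /chiF /=.
      by rewrite !prod1 ?mulr1 //; [exact: (homs_sub (subsetDl _ _) hs) | exact: homs_sub hs].
    by rewrite !prod1 ?mulr1 //; [exact: (homs_sub (subsetDl _ _) ht) | exact: homs_sub ht].
  have hsum : forall xy, \sum_(u in D) c u * chi u xy = 0.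
    case=> x y; rewrite big_mkcond big_sumType /=.
    have E1 : \sum_(S : {set I}) (if inl S \in D then c (inl S) * chi (inl S) (x, y) else 0)
              = \prod_(i in A) s i (x + y).
      rewrite [RHS](eq_bigr (fun i => s i x + s i y)); last by move=> i /hs [].
      rewrite expand [RHS]big_mkcond; apply: eq_bigr => S1 _.
      by rewrite inE powersetE; case: ifP => _ //; rewrite mul1r.
    have E2 : \sum_(T : {set J}) (if inr T \in D then c (inr T) * chi (inr T) (x, y) else 0)
              = - \prod_(j in B) t j (x + y).
      rewrite [in RHS](eq_bigr (fun i => t i x + t i y)); last by move=> i /ht [].
      rewrite expand -sumrN [RHS]big_mkcond; apply: eq_bigr => T1 _.
      by rewrite inE powersetE; case: ifP => _; rewrite ?oppr0 // mulN1r.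
    by rewrite E1 E2 r subrr.
  have := dedekind hmul hone hsum (inl [set i0]).
  rewrite big_mkcond big_sumType /=.
  have F1 : forall (P : {set I} -> bool), \sum_W (if P W then (1 : L) else 0) = #|[set W | P W]|%:R.
    by move=> P; rewrite -sumr_const [RHS]big_mkcond; apply: eq_bigr => W _; rewrite !inE.
  have F2 : forall (P : {set J} -> bool), \sum_W (if P W then (-1 : L) else 0) = - #|[set W | P W]|%:R.
    move=> P; rewrite -sumr_const -sumrN [RHS]big_mkcond; apply: eq_bigr => W _; rewrite !inE.
    by case: (P W); rewrite ?oppr0.
  rewrite F1 F2.
  have e1 := cardLS IH cA' A1 i0A hs gs cA hs gs (fun a => erefl).
  have e2 := cardLS IH cA' A1 i0A hs gs cB ht gt (fun a => esym (r a)).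
  have -> : #|[set W : {set I} | (inl W \in D) && (chiF s A W == chiF s A [set i0])]| =
            #|[set W : {set I} | (W \subset A) && (chiF s A W == chiF s A [set i0])]|.
    by apply: eq_card => W; rewrite !inE.
  have -> : #|[set W : {set J} | (inr W \in D) && (chiF t B W == chiF s A [set i0])]| =
            #|[set W : {set J} | (W \subset B) && (chiF t B W == chiF s A [set i0])]|.
    by apply: eq_card => W; rewrite !inE.
  rewrite e1 e2 A1.
  have c0 : (0 < cnt s A (s i0))%N by rewrite /cnt card_gt0; apply/set0Pn; exists i0; rewrite inE i0A eqxx.
  case: ifP => _.
    by move/eqP; rewrite subr_eq0 => /eqP; apply: cnt_eq_good.
  rewrite subr0 => /eqP e; exfalso; move: (gs (s i0) (cnt s A (s i0))); rewrite c0 leqnn e.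
  by move/(_ isT).
apply: perm_from_cnt; last by rewrite !size_msq.
move=> x /mapP [i0]; rewrite mem_enum => i0A ->; rewrite !count_msq; exact: key.
Qed.

End LemT.
Section Seqs.
Context {K L : fieldType}.
Implicit Types u v w z r : seq (K -> L).

Definition prs u (a : K) := \prod_(x <- u) x a.
Definition homseq u := forall x, x \in u -> ishom x.
Definition goodseq u := forall f k, (0 < k <= count_mem f u)%N -> (k%:R : L) != 0.

Definition fam u := fun i : 'I_(size u) => nth (fun _ => 0) u i.
Arguments fam : clear implicits.

Lemma msq_fam u : msq (fam u) setT = u.
Proof.
rewrite /msq enum_setT /fam -enumT.
rewrite -[RHS](mkseq_nth (fun _ => 0)) /mkseq -val_enum_ord -map_comp.
by [].
Qed.

Lemma prs_fam u a : prs u a = \prod_(i in setT) fam u i a.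
Proof.
rewrite /prs (big_nth (fun _ => 0)) big_mkord.
by apply: eq_bigl => i; rewrite inE.
Qed.

Lemma lemTseq u v : homseq u -> homseq v -> goodseq u -> goodseq v ->
  (forall a, prs u a = prs v a) -> perm_eq u v.
Proof.
move=> hu hv gu gv r.
rewrite -(msq_fam u) -(msq_fam v).
apply: (@lemT _ _ (maxn (size u) (size v))).
- by rewrite cardsT card_ord leq_maxl.
- by rewrite cardsT card_ord leq_maxr.
- by move=> i _; apply: hu; rewrite /fam mem_nth.
- by move=> i _; apply: hv; rewrite /fam mem_nth.
- by move=> f k; rewrite -count_msq msq_fam; apply: gu.
- by move=> f k; rewrite -count_msq msq_fam; apply: gv.
by move=> a; rewrite -!prs_fam.
Qed.

End Seqs.
Section Frob.
Context {K L : fieldType} (p : nat) (pL : p \in [pchar L]).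
Implicit Types u v w z r : seq (K -> L).
Implicit Types f y : K -> L.

Definition frobf (f : K -> L) : K -> L := fun a => f a ^+ p.

Lemma p_gt1 : (1 < p)%N.
Proof. exact: prime_gt1 (pcharf_prime pL). Qed.

Lemma fr_inj (x y : L) : x ^+ p = y ^+ p -> x = y.
Proof. by move=> e; apply: (fmorph_inj (pFrobenius_aut pL)). Qed.

Lemma frobf_hom f : ishom f -> ishom (frobf f).
Proof.
case=> f1 fM fD; split; rewrite /frobf.
- by rewrite f1 expr1n.
- by move=> a b; rewrite fM exprMn.
- by move=> a b; rewrite fD; exact: (rmorphD (pFrobenius_aut pL)).
Qed.

Lemma frob0 f : frob_eq p f f 0.
Proof. by move=> a; rewrite expn0 expr1. Qed.

Lemma frob_up f y l : frob_eq p (frobf f) y l -> frob_eq p f y (l + 1).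
Proof.
case: l => [k|k] h.
  have -> : Posz k + 1 = Posz k.+1 by rewrite -addn1 PoszD.
  by move=> a /=; rewrite h /frobf -exprM expnS.
case: k h => [|k] h.
  have -> : Negz 0 + 1 = 0 by [].
  move=> a /=; rewrite expn0 expr1; apply: fr_inj; have := h a; by rewrite expn1.
have -> : Negz k.+1 + 1 = Negz k by rewrite !NegzE; lia.
by move=> a /=; apply: fr_inj; rewrite -exprM -expnSr; apply: h.
Qed.

Lemma frob_down f y l : frob_eq p y (frobf f) l -> frob_eq p y f (l - 1).
Proof.
case: l => [[|k]|k] h.
- have -> : Posz 0 - 1 = Negz 0 by [].
  by move=> a /=; rewrite expn1; have := h a; rewrite expn0 expr1.
- have -> : Posz k.+1 - 1 = Posz k by lia.
  by move=> a /=; apply: fr_inj; rewrite -exprM -expnSr; apply: h.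
- have -> : Negz k - 1 = Negz k.+1 by rewrite !NegzE; lia.
  by move=> a /=; rewrite -(h a) /frobf -exprM -expnS.
Qed.

End Frob.
Section Merge.
Context {K L : fieldType} (p : nat) (pL : p \in [pchar L]).
Implicit Types u v w z r : seq (K -> L).
Implicit Types f y : K -> L.

Definition FB u v := forall y, y \in v -> exists2 x, x \in u &
  exists l : int, - ((size v)%:Z - 1) <= l * (p%:Z - 1) <= (size u)%:Z - 1 /\ frob_eq p x y l.

Lemma filter1 f u : filter (pred1 f) u = nseq (count_mem f u) f.
Proof. by elim: u => //= x u IH; case: eqP => [->|_]; rewrite IH. Qed.

Lemma prs_nseq f n a : \prod_(x <- nseq n f) x a = f a ^+ n.
Proof. by elim: n => [|n IH]; rewrite ?big_nil ?expr0 // big_cons IH exprS. Qed.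

Lemma merge_perm f u : (p <= count_mem f u)%N ->
  perm_eq u (nseq p f ++ (nseq (count_mem f u - p) f ++ filter (predC (pred1 f)) u)).
Proof.
move=> h; rewrite catA -nseqD subnKC // -filter1 perm_sym.
by rewrite perm_filterC.
Qed.

Lemma mergeA f r w z : perm_eq w (nseq p f ++ r) -> FB (frobf p f :: r) z -> FB w z.
Proof.
move=> pw H y yz; have [x xw' [l [/andP [b1 b2] fe]]] := H y yz.
have szw : size w = (p + size r)%N by rewrite (perm_size pw) size_cat size_nseq.
have p1 := p_gt1 pL.
move: xw'; rewrite inE => /orP [/eqP xe | xr].
  exists f.
    by rewrite (perm_mem pw) mem_cat mem_nseq eqxx andbT; apply/orP; left; lia.
  exists (l + 1); split; last by rewrite xe in fe; apply: (frob_up pL fe).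
  move: b1 b2; rewrite mulrDl mul1r szw /=.
  set X := l * _; move=> b1 b2; apply/andP; split; lia.
exists x; first by rewrite (perm_mem pw) mem_cat xr orbT.
exists l; split => //; move: b1 b2; rewrite szw /=.
set X := l * _; move=> b1 b2; apply/andP; split; lia.
Qed.

Lemma mergeB f r w z : perm_eq w (nseq p f ++ r) -> FB z (frobf p f :: r) -> FB z w.
Proof.
move=> pw H x xw.
have szw : size w = (p + size r)%N by rewrite (perm_size pw) size_cat size_nseq.
have p1 := p_gt1 pL.
move: xw; rewrite (perm_mem pw) mem_cat mem_nseq => /orP [/andP [_ /eqP xe] | xr].
  have [y yz [l [/andP [b1 b2] fe]]] := H _ (mem_head _ _).
  exists y => //; exists (l - 1); split; last by rewrite xe; apply: (frob_down pL fe).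
  move: b1 b2; rewrite mulrBl mul1r szw /=.
  set X := l * _; move=> b1 b2; apply/andP; split; lia.
have xr' : x \in frobf p f :: r by rewrite inE xr orbT.
have [y yz [l [/andP [b1 b2] fe]]] := H x xr'.
exists y => //; exists l; split => //; move: b1 b2; rewrite szw /=.
set X := l * _; move=> b1 b2; apply/andP; split; lia.
Qed.


Lemma mem_size0 (T : eqType) (x : T) (s : seq T) : x \in s -> (0 < size s)%N.
Proof. by case: s. Qed.

Lemma merge_pkg u : homseq u -> ~ goodseq u -> exists f, exists r,
  [/\ perm_eq u (nseq p f ++ r), homseq (frobf p f :: r),
      (forall a, prs (frobf p f :: r) a = prs u a) & size u = (p + size r)%N].
Proof.
move=> hu ng.
have [f hf] : exists f, (p <= count_mem f u)%N.
  case: (pselect (exists f, (p <= count_mem f u)%N)) => // nf; exfalso.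
  apply: ng => f k /andP [k0 kc]; rewrite -(dvdn_pcharf pL); apply/negP => /(dvdn_leq k0) pk.
  by apply: nf; exists f; apply: leq_trans pk kc.
have pe := merge_perm hf.
set r := (nseq (count_mem f u - p) f ++ _) in pe.
have p1 := p_gt1 pL.
exists f, r; split.
- exact: pe.
- move=> x; rewrite inE => /orP [/eqP -> | xr].
    apply: (frobf_hom pL); apply: (hu f); rewrite (perm_mem pe) mem_cat mem_nseq eqxx andbT.
    by apply/orP; left; lia.
  by apply: (hu x); rewrite (perm_mem pe) mem_cat xr orbT.
- move=> a; rewrite /prs (perm_big _ pe) big_cat big_cons prs_nseq.
  by [].
by rewrite (perm_size pe) size_cat size_nseq.
Qed.

Lemma lemF N : forall u v, (size u + size v <= N)%N -> homseq u -> homseq v ->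
  (forall a, prs u a = prs v a) -> FB u v /\ FB v u.
Proof.
have p1 := p_gt1 pL.
elim: N => [|N IH] u v sz hu hv r.
  move: sz; rewrite leqn0 addn_eq0 !size_eq0 => /andP [/eqP -> /eqP ->].
  by split => y.
case: (pselect (goodseq u)) => gu; last first.
  have [f [w [pe hw rw sw]]] := merge_pkg hu gu.
  have sz' : (size (frobf p f :: w) + size v <= N)%N by move: sz; rewrite sw /=; lia.
  have [H1 H2] := IH (frobf p f :: w) v sz' hw hv
     (fun a => etrans (rw a) (r a)).
  by split; [exact: mergeA pe H1 | exact: mergeB pe H2].
case: (pselect (goodseq v)) => gv; last first.
  have [f [w [pe hw rw sw]]] := merge_pkg hv gv.
  have sz' : (size u + size (frobf p f :: w) <= N)%N by move: sz; rewrite sw /=; lia.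
  have [H1 H2] := IH u (frobf p f :: w) sz' hu hw
     (fun a => etrans (r a) (esym (rw a))).
  by split; [exact: mergeB pe H1 | exact: mergeA pe H2].
have pe := lemTseq hu hv gu gv r.
have aux : forall w z, perm_eq w z -> FB w z.
  move=> w z pwz y yz; exists y; first by rewrite (perm_mem pwz).
  have := mem_size0 yz; have : (0 < size w)%N by rewrite (perm_size pwz); apply: mem_size0 yz.
  move=> h1 h2; exists 0; split; last exact: frob0.
  by rewrite mul0r oppr_le0 !subr_ge0 !lez_nat h1 h2.
by split; apply: aux; rewrite // perm_sym.
Qed.

End Merge.
Section Final.
Context {K L : fieldType} (p : nat) (pL : p \in [pchar L]).
Implicit Types u v w : seq (K -> L).

Lemma good_lt u : (forall f, count_mem f u < p)%N -> goodseq u.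
Proof.
move=> h f k /andP [k0 kc]; rewrite -(dvdn_pcharf pL); apply/negP => /(dvdn_leq k0) pk.
by have := h f; lia.
Qed.

Lemma lemGood u v : homseq u -> homseq v -> (forall a, prs u a = prs v a) ->
  (forall f, count_mem f u < p)%N -> (size v <= size u)%N -> perm_eq u v.
Proof.
move=> hu hv r lt sz.
have p1 := p_gt1 pL.
move: {2}(size v) (leqnn (size v)) => N svN.
elim: N v svN hv r sz => [|N IH] v svN hv r sz;
  (case: (pselect (goodseq v)) => gv; first exact: lemTseq hu hv (good_lt lt) gv r);
  have [f [w [pe hw rw sw]]] := merge_pkg pL hv gv.
  by move: svN; rewrite sw; lia.
have := IH (frobf p f :: w) _ hw (fun a => etrans (r a) (esym (rw a))).
move/(_ _ _)/perm_size; rewrite /= => H.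
by exfalso; move: sz svN; rewrite sw; move: H; rewrite /=; lia.
Qed.

End Final.
Lemma rmorph_hom {K L : fieldType} (f : {rmorphism K -> L}) : ishom (f : K -> L).
Proof. by split; [exact: rmorph1 | exact: rmorphM | exact: rmorphD]. Qed.

Lemma case1 {K L : fieldType} (n m : nat)
  (sigma : 'I_n -> {rmorphism K -> L}) (tau : 'I_m -> {rmorphism K -> L}) :
  perm_eq [seq (tau j : K -> L) | j <- enum 'I_m] [seq (sigma i : K -> L) | i <- enum 'I_n] ->
  n = m /\ exists (e : m = n) (g : {perm 'I_n}),
       forall i : 'I_m, tau i =1 sigma (g (cast_ord e i)).
Proof.
move=> pe; have nm : n = m by move/perm_size: pe; rewrite !size_map -?enumT !size_enum_ord.
split => //; subst m; exists erefl.
pose tt := [tuple (tau j : K -> L) | j < n]; pose ts := [tuple (sigma i : K -> L) | i < n].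
have pe' : perm_eq tt ts := pe.
case/tuple_permP: pe' => g E.
have E' : tt = [tuple tnth ts (g i) | i < n] := val_inj E.
exists g => i; rewrite cast_ord_id.
have := congr1 (fun t => tnth t i) E'; rewrite !tnth_mktuple => h a.
exact: (congr1 (fun f => f a) h).
Qed.

Unset Implicit Arguments.

Theorem theorem1p4 (K L : fieldType) (n m : nat)
  (sigma : 'I_n -> {rmorphism K -> L}) (tau : 'I_m -> {rmorphism K -> L}) :
  (0 < m)%N -> (m <= n)%N ->
  (forall a : K, \prod_(i < n) sigma i a = \prod_(j < m) tau j a) ->
  (n = m /\
     exists (e : m = n) (g : {perm 'I_n}),
       forall i : 'I_m, tau i =1 sigma (g (cast_ord e i)))
  \/
  (exists p : nat,
     (0 < p)%N /\ p \in [pchar K] /\ p \in [pchar L] /\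
     (exists f : 'I_p -> 'I_n,
        (forall k k' : 'I_p, (k < k')%N -> (f k < f k')%N) /\
        (forall k k' : 'I_p, sigma (f k) =1 sigma (f k'))) /\
     (forall j : 'I_m, exists (l : int) (i : 'I_n),
        - (m%:Z - 1) <= l * (p%:Z - 1) <= n%:Z - 1 /\
        frob_eq p (sigma i) (tau j) l) /\
     (forall i : 'I_n, exists (l : int) (j : 'I_m),
        - (n%:Z - 1) <= l * (p%:Z - 1) <= m%:Z - 1 /\
        frob_eq p (tau j) (sigma i) l)).
Proof.
move=> m0 mn hrel.
pose us := [seq (sigma i : K -> L) | i <- enum 'I_n].
pose ut := [seq (tau j : K -> L) | j <- enum 'I_m].
have hus : homseq us by move=> x /mapP [i _ ->]; apply: rmorph_hom.
have hut : homseq ut by move=> x /mapP [i _ ->]; apply: rmorph_hom.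
have rel : forall a, prs us a = prs ut a.
  by move=> a; rewrite /prs !big_map -!enumT !big_enum; apply: hrel.
have sus : size us = n by rewrite size_map size_enum_ord.
have sut : size ut = m by rewrite size_map size_enum_ord.
case: (pselect (exists p, p \in [pchar L])) => [[p pL]|nop]; last first.
  have g0 : forall u : seq (K -> L), goodseq u.
    move=> u f k /andP [k0 _]; apply/negP => /(natf0_pchar k0) [q qL].
    by apply: nop; exists q.
  by left; apply: case1; rewrite perm_sym; apply: lemTseq.
case: (pselect (forall f, count_mem f us < p)%N) => [lt|nlt].
  left; apply: case1; rewrite perm_sym; apply: (lemGood pL) => //.
  by rewrite sus sut.
right; exists p.
have p1 := p_gt1 pL.
have i0 : 'I_n by exists 0%N; lia.
split; first by lia.
split; first by rewrite -(fmorph_pchar (sigma i0)).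
split => //.
have [FB1 FB2] := lemF pL (leqnn _) hus hut rel.
split.
  have [rho hr] : exists rho, (p <= count_mem rho us)%N.
    case: (pselect (exists rho, (p <= count_mem rho us)%N)) => // nr; exfalso.
    apply: nlt => f; rewrite ltnNge; apply/negP => h; apply: nr; by exists f.
  pose P := [seq i <- enum 'I_n | (sigma i : K -> L) == rho].
  have szP : size P = count_mem rho us.
    by rewrite size_filter /us [RHS]count_map.
  have tr : transitive (fun i j : 'I_n => (i < j)%N) by move=> a b c; apply: ltn_trans.
  have srt : sorted (fun i j : 'I_n => (i < j)%N) P.
    apply: sorted_filter => //.
    by have := iota_ltn_sorted 0 n; rewrite -val_enum_ord sorted_map.
  exists (fun k => nth i0 P k); split.
    move=> k k' kk'; apply: (sorted_ltn_nth tr i0 srt) => //; rewrite inE szP.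
      by apply: leq_trans hr; apply: ltn_ord.
    by apply: leq_trans hr; apply: ltn_ord.
  have hP : forall k : 'I_p, (sigma (nth i0 P k) : K -> L) = rho.
    move=> k; have : nth i0 P k \in P by apply: mem_nth; rewrite szP; apply: leq_trans hr; apply: ltn_ord.
    by rewrite mem_filter => /andP [/eqP].
  by move=> k k' a; rewrite (congr1 (fun f => f a) (hP k)) (congr1 (fun f => f a) (hP k')).
split.
  move=> j; have tj : (tau j : K -> L) \in ut by apply: map_f; rewrite mem_enum.
  have [x /mapP [i _ ->] [l [b fe]]] := FB1 _ tj.
  by exists l, i; rewrite -sus -sut.
move=> i; have si : (sigma i : K -> L) \in us by apply: map_f; rewrite mem_enum.
have [x /mapP [j _ ->] [l [b fe]]] := FB2 _ si.
by exists l, j; rewrite -sus -sut.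
Qed.
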